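(* For any $\mathbf A\in\mathbb R^{m\times n}$ and any $\alpha>0$, if $S\sim\mathrm{DPP}(\frac1\alpha\mathbf A^\top\mathbf A)$, then \[ \mathbb E[\mathrm{Er}_{\mathbf A}(S)]=\mathrm{tr}\big(\mathbf A\mathbf A^\top(\mathbf I+\tfrac1\alpha\mathbf A\mathbf A^\top)^{-1}\big)=\mathbb E[|S|]\cdot\alpha. \]
   Context: For $\mathbf A\in\mathbb R^{m\times n}$ with columns $\mathbf a_1,\dots,\mathbf a_n$ and $S\subseteq\{1,\dots,n\}$, $\mathbf P_S$ is the orthogonal projection onto $\mathrm{span}\{\mathbf a_i:i\in S\}$ and $\mathrm{Er}_{\mathbf A}(S)=\|\mathbf A-\mathbf P_S\mathbf A\|_F^2$. For a p.s.d. $n\times n$ matrix $\mathbf K$, $S\sim\mathrm{DPP}(\mathbf K)$ is the distribution over all subsets $S\subseteq\{1,\dots,n\}$ with $\Pr(S)=\det(\mathbf K_{S,S})/\det(\mathbf I+\mathbf K)$, $\mathbf K_{S,S}$ the principal submatrix indexed by $S$ (empty determinant $=1$). *)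

(* Defs.v *)
From HB Require Import structures.
From mathcomp Require Import all_boot all_order all_algebra.
Set Implicit Arguments. Unset Strict Implicit. Unset Printing Implicit Defensive.
Import Order.TTheory GRing.Theory Num.Theory.
Local Open Scope ring_scope.

Section Defs.
Variable R : realFieldType.

Definition colsS (m n : nat) (A : 'M[R]_(m, n)) (S : {set 'I_n}) : 'M[R]_(m, #|S|) :=
  \matrix_(i < m, j < #|S|) A i (enum_val j).

(* Orthogonal projection onto span{a_i : i in S}: with B a matrix whose rows
   form a basis of that span, P_S = B^T (B B^T)^{-1} B. *)
Definition projS (m n : nat) (A : 'M[R]_(m, n)) (S : {set 'I_n}) : 'M[R]_m :=
  let B := row_base (colsS A S)^T in
  B^T *m invmx (B *m B^T) *m B.

Definition frob2 (m n : nat) (M : 'M[R]_(m, n)) : R :=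
  \sum_(i < m) \sum_(j < n) M i j ^+ 2.

Definition Er (m n : nat) (A : 'M[R]_(m, n)) (S : {set 'I_n}) : R :=
  frob2 (A - projS A S *m A).

Definition principal (n : nat) (K : 'M[R]_n) (S : {set 'I_n}) : 'M[R]_#|S| :=
  \matrix_(i < #|S|, j < #|S|) K (enum_val i) (enum_val j).

Definition dpp_prob (n : nat) (K : 'M[R]_n) (S : {set 'I_n}) : R :=
  \det (principal K S) / \det (1%:M + K).

Definition dpp_expect (n : nat) (K : 'M[R]_n) (f : {set 'I_n} -> R) : R :=
  \sum_(S : {set 'I_n}) dpp_prob K S * f S.

End Defs.

(* Main.v *)
Require Import Defs.
From HB Require Import structures.
From mathcomp Require Import all_boot all_order all_algebra.
From mathcomp Require Import ring lra.
Set Implicit Arguments. Unset Strict Implicit. Unset Printing Implicit Defensive.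
Import Order.TTheory GRing.Theory Num.Theory.
Local Open Scope ring_scope.

Section Gen.
Variable R : realFieldType.

Lemma sylvester n k (E : 'M[R]_(n, k)) (F : 'M[R]_(k, n)) :
  \det (1%:M + E *m F) = \det (1%:M + F *m E).
Proof.
have h1 : block_mx 1%:M (-E) F 1%:M =
   block_mx 1%:M 0 F 1%:M *m block_mx 1%:M (-E) 0 (1%:M + F *m E).
  rewrite mulmx_block ?mul1mx ?mulmx1 ?mul0mx ?mulmx0 ?addr0 ?add0r.
  by rewrite mulmxN addrC addrK.
have h2 : block_mx 1%:M (-E) F 1%:M =
   block_mx 1%:M (-E) 0 1%:M *m block_mx (1%:M + E *m F) 0 F 1%:M.
  rewrite mulmx_block ?mul1mx ?mulmx1 ?mul0mx ?mulmx0 ?addr0 ?add0r mulNmx.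
  by rewrite addrK.
have := congr1 determinant h1; rewrite {1}h2 !det_mulmx det_ublock det_lblock.
by rewrite det_lblock det_ublock !det1 !mul1r !mulr1 => ->.
Qed.

Lemma cofactor_eq n (X Y : 'M[R]_n) i j :
  (forall a b, a != i -> b != j -> X a b = Y a b) -> cofactor X i j = cofactor Y i j.
Proof.
move=> h; rewrite /cofactor; congr (_ * \det _); apply/matrixP => a b.
by rewrite !mxE; apply: h; rewrite eq_sym neq_lift.
Qed.

Lemma det_addE n (X : 'M[R]_n) i t :
  \det (X + t *: delta_mx i i) = \det X + t * cofactor X i i.
Proof.
rewrite (expand_det_row _ i) (expand_det_row X i).
have hc : forall j, cofactor (X + t *: delta_mx i i) i j = cofactor X i j.
  move=> j; apply: cofactor_eq => a b ha _.
  by rewrite !mxE (negPf ha) /= mulr0 addr0.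
under eq_bigr do rewrite hc !mxE eqxx mulrDl.
rewrite big_split /=; congr (_ + _).
rewrite (bigD1 i) //= big1 ?addr0; first by rewrite eqxx mulr1.
by move=> j /negPf hj; rewrite hj mulr0 mul0r.
Qed.

Lemma det_rowunit n (X : 'M[R]_n) i :
  (forall b, X i b = (i == b)%:R) -> \det X = cofactor X i i.
Proof.
move=> h; rewrite (expand_det_row _ i) (bigD1 i) //= big1 ?addr0.
  by rewrite h eqxx mul1r.
by move=> j hj; rewrite h eq_sym (negPf hj) mul0r.
Qed.


Definition Zk n (W : {set 'I_n}) (X : 'M[R]_n) : 'M[R]_n :=
  \matrix_(a, b) if (a \in W) || (b \in W) then (a == b)%:R else X a b.
Definition Dm n (U : {set 'I_n}) : 'M[R]_n := diag_mx (\row_j (j \in U)%:R).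

Lemma DmE n (U : {set 'I_n}) a b : Dm U a b = ((a == b) && (a \in U))%:R.
Proof. by rewrite !mxE; case: (a == b); case: (a \in U). Qed.

Lemma sumU1 n (i : 'I_n) (P : pred {set 'I_n}) (F : {set 'I_n} -> R) :
  \sum_(W | P W && (i \in W)) F W =
  \sum_(W | P (i |: W) && (i \notin W)) F (i |: W).
Proof.
rewrite (reindex_onto (fun W => i |: W) (fun W => W :\ i)) /=; last first.
  by move=> W /andP[_ h]; rewrite setD1K.
apply: eq_bigl => W; rewrite setU11 andbT.
case: (boolP (i \in W)) => h /=.
  case: (P _) => //=; apply/negbTE/eqP => e; move: h; rewrite -e setD11 //.
by rewrite setU1K // eqxx.
Qed.

Lemma Zexp n (U : {set 'I_n}) (X : 'M[R]_n) :
  \det (X + Dm U) = \sum_(W : {set 'I_n} | W \subset U) \det (Zk W X).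
Proof.
move Hk : #|U| => k; elim: k U Hk X => [|k IH] U Hk X.
  have -> := cards0_eq Hk.
  have -> : Dm (set0 : {set 'I_n}) = 0 :> 'M[R]_n by apply/matrixP => a b; rewrite DmE in_set0 andbF mxE.
  rewrite addr0 (eq_bigl (fun W => W == set0)); last by move=> W; rewrite subset0.
  rewrite big_pred1_eq; congr (\det _); apply/matrixP => a b.
  by rewrite mxE !in_set0.
have /card_gt0P [i iU] : (0 < #|U|)%N by rewrite Hk.
have HU' : #|U :\ i| = k by move: Hk; rewrite (cardsD1 i) iU add1n => -[].
have -> : X + Dm U = (X + Dm (U :\ i)) + 1 *: delta_mx i i.
  apply/matrixP => a b; rewrite !mxE in_setD1 mul1r -addrA; congr (_ + _).
  case: (eqVneq a i) => [?|ai]; case: (eqVneq b i) => [?|bi]; subst => //=;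
    rewrite ?iU ?eqxx ?(eq_sym i) ?(negPf ai) ?(negPf bi) /= ?addr0 ?add0r //.
rewrite det_addE mul1r.
have -> : cofactor (X + Dm (U :\ i)) i i = \det (Zk [set i] X + Dm (U :\ i)).
  rewrite (det_rowunit (i := i)); last first.
    move=> b; rewrite !mxE in_set1 eqxx /= setD11.
    have -> : (false%:R : R) = 0 by []. by rewrite mul0rn addr0.
  apply: (@cofactor_eq _ _ _ i i) => a b ai bi.
  by rewrite !mxE !in_set1 (negPf ai) (negPf bi).
rewrite !IH // [RHS](bigID (fun W : {set 'I_n} => i \in W)) /= addrC.
congr (_ + _); first by apply: congr_big => // W; rewrite subsetD1.
rewrite sumU1; symmetry; apply: congr_big => // W.
  by rewrite subUset sub1set iU subsetD1.
move=> _; congr (\det _); apply/matrixP => a b; rewrite !mxE !in_setU1 !in_set1.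
by case: (a \in W); case: (b \in W); case: (a == i); case: (b == i).
Qed.


Definition Em n (S : {set 'I_n}) : 'M[R]_(n, #|S|) :=
  \matrix_(j, l) (j == enum_val l)%:R.

Lemma trEm_mul n (S : {set 'I_n}) p (X : 'M[R]_(n, p)) :
  (Em S)^T *m X = \matrix_(l, k) X (enum_val l) k.
Proof.
apply/matrixP => l k; rewrite !mxE (bigD1 (enum_val l)) //= !mxE eqxx mul1r.
by rewrite big1 ?addr0 // => j hj; rewrite !mxE (negPf hj) mul0r.
Qed.

Lemma mul_Em p n (S : {set 'I_n}) (X : 'M[R]_(p, n)) :
  X *m Em S = \matrix_(k, l) X k (enum_val l).
Proof.
apply/matrixP => k l; rewrite !mxE (bigD1 (enum_val l)) //= !mxE eqxx mulr1.
by rewrite big1 ?addr0 // => j hj; rewrite !mxE (negPf hj) mulr0.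
Qed.

Lemma EmTEm n (S : {set 'I_n}) : (Em S)^T *m Em S = 1%:M.
Proof.
apply/matrixP => l l'; rewrite trEm_mul !mxE.
by rewrite (inj_eq (@enum_val_inj _ _)).
Qed.

Lemma EmEmT n (S : {set 'I_n}) : Em S *m (Em S)^T = Dm S.
Proof.
apply/matrixP => a b; rewrite !mxE.
case: (boolP (a \in S)) => aS.
  have ha := enum_rankK_in aS aS.
  rewrite (bigD1 (enum_rank_in aS a)) //= big1 ?addr0.
    rewrite !mxE ha eqxx mul1r eq_sym; by case: (a == b).
  move=> l hl; rewrite !mxE; case: (eqVneq a (enum_val l)) => h; last by rewrite mul0r.
  have := enum_valK_in aS l; rewrite -h => e; by move: hl; rewrite e eqxx.
rewrite big1 ?mul0rn // => l _; rewrite !mxE.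
case: (eqVneq a (enum_val l)) => h; last by rewrite mul0r.
by move: aS; rewrite h enum_valP.
Qed.



Lemma DmEm n (S : {set 'I_n}) : Dm S *m Em S = Em S.
Proof. by rewrite -EmEmT -mulmxA EmTEm mulmx1. Qed.

Lemma Zk_mask n (S : {set 'I_n}) (X : 'M[R]_n) :
  Zk (~: S) X = Dm S *m X *m Dm S + 1%:M - Dm S.
Proof.
apply/matrixP => a b; rewrite mul_mx_diag mul_diag_mx !mxE !in_setC.
case: (boolP (a \in S)) => aS; case: (boolP (b \in S)) => bS /=;
  rewrite ?mul1r ?mulr1 ?mul0r ?mulr0 ?add0r ?subr0 //.
- by rewrite addrK.
- have -> : (a == b) = false by apply/negbTE; apply: contraNneq bS => <-.
  by rewrite subr0.
- by rewrite mul0rn subr0.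
- by rewrite mul0rn subr0.
Qed.

Lemma det_principal n (S : {set 'I_n}) (K : 'M[R]_n) :
  \det (principal K S) = \det (Zk (~: S) K).
Proof.
have -> : principal K S = (Em S)^T *m K *m Em S.
  by apply/matrixP => a b; rewrite mul_Em trEm_mul !mxE.
rewrite Zk_mask -EmEmT.
have -> : Em S *m (Em S)^T *m K *m (Em S *m (Em S)^T) + 1%:M - Em S *m (Em S)^T
   = 1%:M + Em S *m (((Em S)^T *m K *m Em S - 1%:M) *m (Em S)^T).
  by rewrite mulmxBl mul1mx mulmxBr !mulmxA addrA (addrC 1%:M).
rewrite (sylvester (Em S)) -(mulmxA _ (Em S)^T) EmTEm mulmx1 addrC subrK //.
Qed.

Lemma colsS_E m n (A : 'M[R]_(m, n)) (S : {set 'I_n}) : colsS A S = A *m Em S.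
Proof. by rewrite mul_Em; apply/matrixP => a b; rewrite !mxE. Qed.


Lemma sq0 m (w : 'rV[R]_m) : w *m w^T = 0 -> w = 0.
Proof.
move/matrixP/(_ 0 0); rewrite !mxE => h.
have h2 : forall k, w 0 k ^+ 2 = 0.
  move=> k; have := @psumr_eq0P _ _ predT (fun k => w 0 k * w^T k 0).
  move=> /(_ _ h k isT); rewrite mxE -expr2; apply => j _.
  by rewrite mxE -expr2 sqr_ge0.
apply/matrixP => i k; rewrite (ord1 i) mxE.
by apply/eqP; rewrite -sqrf_eq0 h2.
Qed.

Lemma gram_unit k m (B : 'M[R]_(k, m)) : row_free B -> B *m B^T \in unitmx.
Proof.
move=> fB; rewrite -row_free_unit; apply: inj_row_free => v h.
have : (v *m B) *m (v *m B)^T = 0.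
  by rewrite trmx_mul !mulmxA -(mulmxA v) h mul0mx.
move/sq0/eqP; rewrite mulmx_free_eq0 //; by move/eqP.
Qed.



Section Proj.
Variables (m n : nat) (A : 'M[R]_(m, n)) (S : {set 'I_n}).

Lemma projS_def : projS A S =
  let B := row_base (colsS A S)^T in B^T *m invmx (B *m B^T) *m B.
Proof. by []. Qed.

Lemma projS_sym : (projS A S)^T = projS A S.
Proof.
rewrite projS_def /=; set B := row_base _; have fB : row_free B := row_base_free _; clearbody B.
by rewrite !trmx_mul trmx_inv !trmx_mul trmxK !mulmxA.
Qed.

Lemma projS_Cs : projS A S *m colsS A S = colsS A S.
Proof.
rewrite projS_def /=; set B := row_base _; have fB : row_free B := row_base_free _.
have /submxP [W hW] : ((colsS A S)^T <= B)%MS by rewrite eq_row_base.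
clearbody B.
have hC : B^T *m W^T = colsS A S by rewrite -trmx_mul -hW trmxK.
have uG : B *m B^T \in unitmx by apply: gram_unit.
have e1 : B^T *m invmx (B *m B^T) *m B *m (B^T *m W^T) = B^T *m W^T.
  by rewrite !mulmxA -(mulmxA _ B) -(mulmxA _ (B *m B^T)) mulmxA mulmxKV.
by rewrite hC in e1.
Qed.

Lemma projS_range : exists Y : 'M[R]_(#|S|, m), projS A S = colsS A S *m Y.
Proof.
rewrite projS_def /=; set B := row_base _.
have /submxP [V hV] : (B <= (colsS A S)^T)%MS by rewrite eq_row_base.
clearbody B.
exists (V^T *m invmx (B *m B^T) *m B).
by rewrite {1}hV trmx_mul trmxK !mulmxA.
Qed.

End Proj.


Lemma Dm_sym n (S : {set 'I_n}) : (Dm S)^T = Dm S.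
Proof. exact: tr_diag_mx. Qed.

Lemma lin_aux n (X E D : 'M[R]_n) (a p : R) :
  a *: (X + p *: E) + (1%:M - (D + E)) = (a *: X + (1%:M - D)) + (a * p - 1) *: E.
Proof. by apply/matrixP => x y; rewrite !mxE; ring. Qed.

Section Main.
Variables (m n : nat) (A : 'M[R]_(m, n)) (al : R).
Hypothesis hal : 0 < al.
Let K := al^-1 *: (A^T *m A).

Definition Cm (S : {set 'I_n}) := A *m Dm S.
Definition rho (S : {set 'I_n}) i := \sum_(k < m) (A - projS A S *m A) k i ^+ 2.

Lemma Cm_E S : Cm S = colsS A S *m (Em S)^T.
Proof. by rewrite colsS_E -mulmxA EmEmT. Qed.

Lemma PCm S : projS A S *m Cm S = Cm S.
Proof. by rewrite Cm_E mulmxA projS_Cs. Qed.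

Lemma Prange_c S (x : 'cV[R]_m) :
  exists c : 'cV[R]_n, projS A S *m x = Cm S *m c /\ Dm S *m c = c.
Proof.
have [Y hY] := projS_range A S.
exists (Em S *m (Y *m x)); split; last by rewrite mulmxA DmEm.
by rewrite hY /Cm -!mulmxA (mulmxA (Dm S)) DmEm colsS_E !mulmxA.
Qed.

Lemma MS_form S : Zk (~: S) K = al^-1 *: ((Cm S)^T *m Cm S) + (1%:M - Dm S).
Proof.
rewrite Zk_mask /K /Cm trmx_mul Dm_sym scalemxAr scalemxAl addrA; congr (_ + _ - _).
by rewrite -scalemxAl -!scalemxAr -scalemxAl !mulmxA.
Qed.

Lemma rho_in (S : {set 'I_n}) i : i \in S -> rho S i = 0.
Proof.
move=> iS; rewrite /rho big1 // => k _.
have hc : col i A = col i (Cm S).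
  by apply/matrixP => x z; rewrite /Cm mul_mx_diag !mxE iS mulr1.
have hcm : forall (X : 'M[R]_m) (Y : 'M[R]_(m, n)), col i (X *m Y) = X *m col i Y.
  by move=> X Y; rewrite !colE mulmxA.
have : col i (projS A S *m A) = col i A by rewrite hcm hc -hcm PCm.
move/matrixP/(_ k 0); rewrite !mxE => ->; by rewrite subrr expr0n.
Qed.

Lemma DmU1 (S : {set 'I_n}) i : i \notin S ->
  Dm (i |: S) = Dm S + (delta_mx 0 i : 'rV[R]_n)^T *m delta_mx 0 i.
Proof.
move=> iS; rewrite trmx_delta mul_delta_mx; apply/matrixP => a b.
rewrite !mxE in_setU1.
case: (eqVneq a i) => [?|ai]; case: (eqVneq b i) => [?|bi]; subst => /=;
  rewrite ?(negPf iS) ?eqxx ?(negPf ai) ?(negPf bi) ?(eq_sym i) //=.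
- by rewrite add0r.
- by rewrite (negPf bi) addr0.
- by rewrite addr0.
- by rewrite addr0.
Qed.

Lemma DmDm (S T : {set 'I_n}) : S \subset T -> Dm T *m Dm S = Dm S.
Proof.
move=> sST; rewrite mul_diag_mx; apply/matrixP => a b; rewrite !mxE.
case: (boolP (a \in S)) => aS; last by rewrite mul0rn mulr0.
by rewrite (subsetP sST _ aS) mul1r.
Qed.

Lemma rec_det (S : {set 'I_n}) i : i \notin S ->
  \det (Zk (~: (i |: S)) K) = al^-1 * rho S i * \det (Zk (~: S) K).
Proof.
move=> iS.
set u : 'rV[R]_n := delta_mx 0 i.
set a : 'cV[R]_m := col i A.
set P := projS A S.
have hDT := DmU1 iS; rewrite -/u in hDT.
have hCT : Cm (i |: S) = Cm S + a *m u.
  by rewrite /Cm hDT mulmxDr mulmxA /u trmx_delta -colE.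
have [c [hc1 hc2]] := Prange_c S a; rewrite -/P in hc1.
set r := a - P *m a.
have hCP : (Cm S)^T *m P = (Cm S)^T.
  by rewrite /P -[in LHS](projS_sym A S) -trmx_mul PCm.
have hr : (Cm S)^T *m r = 0 by rewrite /r mulmxBr mulmxA hCP subrr.
have huc : u *m c = 0.
  rewrite -hc2 mulmxA; have -> : u *m Dm S = 0; last by rewrite mul0mx.
  rewrite mul_mx_diag; apply/matrixP => x y; rewrite !mxE.
  case: (eqVneq y i) => [->|yi]; first by rewrite (negPf iS) mulr0.
  by rewrite andbF mul0r.
set U := 1%:M + c *m u.
have hdetU : \det U = 1 by rewrite /U sylvester huc addr0 det1.
set C' := Cm S + r *m u.
have hCTU : Cm (i |: S) = C' *m U.
  have e : Cm S *m c + r = a by rewrite -hc1 /r addrC subrK.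
  have e2 : (Cm S + r *m u) *m (c *m u) = (Cm S *m c) *m u.
    by rewrite mulmxDl !mulmxA -(mulmxA r) huc mulmx0 mul0mx addr0.
  by rewrite hCT /C' /U mulmxDr mulmx1 e2 -addrA -mulmxDl (addrC r) e.
have hIU : (1%:M - Dm (i |: S)) *m U = 1%:M - Dm (i |: S).
  rewrite /U mulmxDr mulmx1 mulmxA mulmxBl mul1mx -{2}hc2 mulmxA DmDm.
    by rewrite hc2 subrr mul0mx addr0.
  by apply/subsetP => x xS; rewrite in_setU1 xS orbT.
have hUI : U^T *m (1%:M - Dm (i |: S)) = 1%:M - Dm (i |: S).
  have hs : (1%:M - Dm (i |: S))^T = 1%:M - Dm (i |: S).
    by rewrite linearB /= trmx1 Dm_sym.
  by rewrite -[LHS]trmxK trmx_mul trmxK hs hIU hs.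
set M' := al^-1 *: (C'^T *m C') + (1%:M - Dm (i |: S)).
have hMT : Zk (~: (i |: S)) K = U^T *m M' *m U.
  rewrite MS_form hCTU /M' (mulmxDr U^T) (mulmxDl _ _ U) hUI hIU; congr (_ + _).
  by rewrite trmx_mul -scalemxAr -scalemxAl !mulmxA.
have hrr : r^T *m r = (rho S i)%:M.
  have hr' : r = col i (A - P *m A) by rewrite /r /a !colE mulmxBl mulmxA.
  apply/matrixP => x y; rewrite (ord1 x) (ord1 y) !mxE eqxx mulr1n /rho.
  apply: eq_bigr => k _; rewrite hr' !mxE expr2 //.
have hCC : C'^T *m C' = (Cm S)^T *m Cm S + rho S i *: (u^T *m u).
  have htr : C'^T = (Cm S)^T + u^T *m r^T.
    by rewrite /C' -trmx_mul; apply/matrixP => x y; rewrite !mxE.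
  have hrC : r^T *m Cm S = 0 by rewrite -[r^T *m _]trmxK trmx_mul trmxK hr trmx0.
  rewrite htr /C' mulmxDl !mulmxDr (mulmxA (Cm S)^T) hr mul0mx addr0.
  rewrite -(mulmxA u^T) hrC mulmx0 add0r (mulmxA _ r u) -(mulmxA u^T) hrr.
  by rewrite mul_mx_scalar -scalemxAl.
have hM' : M' = Zk (~: S) K + (al^-1 * rho S i - 1) *: delta_mx i i.
  by rewrite /M' hCC hDT MS_form /u trmx_delta mul_delta_mx lin_aux.
rewrite hMT !det_mulmx det_tr hdetU mul1r mulr1 hM' det_addE.
rewrite -(@det_rowunit _ _ i); last first.
  by move=> b; rewrite !mxE in_setC iS.
ring.
Qed.

Definition dZ (S : {set 'I_n}) := \det (Zk (~: S) K).

Lemma dZ0 : dZ set0 = 1.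
Proof.
rewrite /dZ setC0 -(det1 _ n); congr (\det _); apply/matrixP => a b.
by rewrite !mxE in_setT.
Qed.

Lemma rho_ge0 S i : 0 <= rho S i.
Proof. by apply: sumr_ge0 => k _; apply: sqr_ge0. Qed.

Lemma dZ_ge0 S : 0 <= dZ S.
Proof.
move Hk : #|S| => k; elim: k S Hk => [|k IH] S Hk.
  by rewrite (cards0_eq Hk) dZ0 ler01.
have /card_gt0P [i iS] : (0 < #|S|)%N by rewrite Hk.
have HS' : #|S :\ i| = k by move: Hk; rewrite (cardsD1 i) iS add1n => -[].
rewrite -(setD1K iS) /dZ rec_det ?setD11 //.
apply: mulr_ge0; last exact: IH.
by apply: mulr_ge0; [rewrite invr_ge0 ltW | exact: rho_ge0].
Qed.

Lemma sum_dZ : \sum_(S : {set 'I_n}) dZ S = \det (1%:M + K).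
Proof.
have -> : 1%:M + K = K + Dm setT.
  rewrite addrC; congr (_ + _); apply/matrixP => a b; rewrite !mxE in_setT.
  by case: (a == b).
rewrite Zexp (reindex_inj (@setC_inj _)) /=; apply: congr_big => // S.
by rewrite subsetT. by move=> _; rewrite /dZ setCK.
Qed.

Lemma det_pos : 0 < \det (1%:M + K).
Proof.
rewrite -sum_dZ (bigD1 set0) //= dZ0.
apply: (lt_le_trans ltr01); rewrite lerDl; apply: sumr_ge0 => S _.
exact: dZ_ge0.
Qed.

Lemma card_swap (F : {set 'I_n} -> R) :
  \sum_(S : {set 'I_n}) #|S|%:R * F S =
  \sum_(j < n) \sum_(S : {set 'I_n} | j \in S) F S.
Proof.
transitivity (\sum_(S : {set 'I_n}) \sum_(j < n) if j \in S then F S else 0).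
  apply: eq_bigr => S _; rewrite -big_mkcond /= sumr_const mulr_natl //.
rewrite exchange_big; apply: eq_bigr => j _; by rewrite -big_mkcond.
Qed.

Lemma card_sum : \sum_(S : {set 'I_n}) #|S|%:R * dZ S =
  n%:R * \det (1%:M + K) - \tr (\adj (1%:M + K)).
Proof.
rewrite card_swap.
have e : forall j : 'I_n, \sum_(S : {set 'I_n} | j \in S) dZ S =
    \det (1%:M + K) - cofactor (1%:M + K) j j.
  move=> j.
  have -> : \det (1%:M + K) - cofactor (1%:M + K) j j = \det (K + Dm (~: [set j])).
    rewrite -mulN1r -det_addE; congr (\det _); apply/matrixP => a b.
    rewrite !mxE in_setC in_set1.
    case: (eqVneq a j) => [?|aj]; case: (eqVneq b j) => [?|bj]; subst => /=;
      rewrite ?eqxx ?(negPf aj) ?(eq_sym j) ?(negPf bj) /= ?mul0rn ?mulr0n; ring.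
  rewrite Zexp (reindex_inj (@setC_inj _)) /=; apply: congr_big => // S.
  by rewrite subsetC sub1set. by move=> _; rewrite /dZ setCK.
under eq_bigr do rewrite e.
rewrite sumrB sumr_const card_ord mulr_natl; congr (_ - _).
by rewrite /mxtrace; apply: eq_bigr => j _; rewrite mxE.
Qed.

Lemma Er_rho S : Er A S = \sum_(i < n) rho S i.
Proof. by rewrite /Er /frob2 exchange_big. Qed.

Lemma er_sum : \sum_(S : {set 'I_n}) dZ S * Er A S =
  al * \sum_(S : {set 'I_n}) #|S|%:R * dZ S.
Proof.
under eq_bigr do rewrite Er_rho mulr_sumr.
rewrite exchange_big card_swap mulr_sumr; apply: eq_bigr => i _.
rewrite [LHS](bigID (fun S : {set 'I_n} => i \in S)) /= big1 ?add0r; last first.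
  by move=> S iS; rewrite rho_in // mulr0.
have := sumU1 i predT dZ; rewrite /= => ->; rewrite mulr_sumr.
apply: eq_bigr => S iS; rewrite /dZ rec_det //.
have : al != 0 by rewrite gt_eqF.
move=> h; by field.
Qed.

End Main.

End Gen.

Theorem lemma6 (R : realFieldType) (m n : nat) (A : 'M[R]_(m, n)) (alpha : R) :
  0 < alpha ->
  let K := alpha^-1 *: (A^T *m A) in
  dpp_expect K (Er A) =
    \tr (A *m A^T *m invmx (1%:M + alpha^-1 *: (A *m A^T))) /\
  \tr (A *m A^T *m invmx (1%:M + alpha^-1 *: (A *m A^T))) =
    dpp_expect K (fun S => #|S|%:R) * alpha.
Proof.
move=> hal K.
set X : 'M[R]_n := 1%:M + K.
set Y : 'M[R]_m := 1%:M + alpha^-1 *: (A *m A^T).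
have hX : 0 < \det X := det_pos A hal.
have hY : 0 < \det Y by have := det_pos A^T hal; rewrite trmxK.
have hXu : X \in unitmx by rewrite unitmxE unitfE gt_eqF.
have hYu : Y \in unitmx by rewrite unitmxE unitfE gt_eqF.
have hal0 : alpha != 0 by rewrite gt_eqF.
have hX0 : \det X != 0 by rewrite gt_eqF.
set T := n%:R - \tr (invmx X).
have hprob : forall S, dpp_prob K S = dZ A alpha S / \det X.
  by move=> S; rewrite /dpp_prob det_principal.
have htrinv : \tr (invmx X) = (\det X)^-1 * \tr (\adj X).
  by rewrite /invmx hXu mxtraceZ.
have c1 : dpp_expect K (Er A) = alpha * T.
  rewrite /dpp_expect; under eq_bigr do rewrite hprob mulrAC.
  rewrite -mulr_suml er_sum // card_sum -/X /T htrinv; by field.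
have c2 : dpp_expect K (fun S => #|S|%:R) = T.
  rewrite /dpp_expect; under eq_bigr do rewrite hprob mulrAC mulrC.
  rewrite -mulr_sumr; under eq_bigr do rewrite mulrC.
  rewrite card_sum -/X /T htrinv; by field.
have hAX : Y *m A = A *m X.
  rewrite /Y /X /K mulmxDl mul1mx mulmxDr mulmx1 -scalemxAl scalemxAr.
  by rewrite -!scalemxAr mulmxA.
have hYA : invmx Y *m A = A *m invmx X.
  by rewrite -[LHS](mulmxK hXu) -(mulmxA (invmx Y)) -hAX mulKmx.
have hK : A^T *m A = alpha *: (X - 1%:M).
  by rewrite /X addrAC subrr add0r /K scalerA mulfV // scale1r.
have c3 : \tr (A *m A^T *m invmx Y) = alpha * T.
  rewrite -mulmxA mxtrace_mulC -mulmxA hYA mulmxA hK -scalemxAl mulmxBl mulmxV //.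
  by rewrite mul1mx mxtraceZ linearB /= mxtrace1.
by rewrite c1 c2 c3 mulrC.
Qed.
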